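(* Let $U=(E,\mathcal{D},\rho)$ and $U'=(E,\mathcal{D}',\rho')$ be U-matroids, with base polyhedra $\mathfrak p=\mathcal{B}(U)$ and $\mathfrak p'=\mathcal{B}(U')$. Then $U'$ is a lattice extension of $U$ (i.e. $\mathcal{D}\subseteq\mathcal{D}'$ and $\rho'|_{\mathcal{D}}=\rho$) if and only if $\mathfrak p'$ is a sheared polyhedron of $\mathfrak p$, i.e. $\mathfrak p'\subseteq\mathfrak p$ and the vertex set of $\mathfrak p'$ contains the vertex set of $\mathfrak p$.
   Context: A U-matroid is a triple $(E,\mathcal{D},\rho)$ with $E$ finite, $\mathcal{D}\subseteq2^E$ an accessible distributive lattice of sets, and $\rho:\mathcal{D}\to\mathbb{N}$ with $\rho(\emptyset)=0$, monotone, submodular, with unit increase. Its base polyhedron is $\mathcal{B}(U)=\{\mathbf{x}\in\mathbb{R}^E:\mathbf{x}(A)\le\rho(A)\ \forall A\in\mathcal{D},\ \mathbf{x}(E)=\rho(E)\}$. *)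

(* Defs.v *)
From HB Require Import structures.
From mathcomp Require Import all_boot all_order all_algebra.
From mathcomp Require Import reals.
Set Implicit Arguments. Unset Strict Implicit. Unset Printing Implicit Defensive.
Import Order.TTheory GRing.Theory Num.Theory.
Local Open Scope ring_scope.

Section UMatroid.
Variable E : finType.

Definition accessible_distr_lattice (D : {set {set E}}) : Prop :=
  [/\ set0 \in D, [set: E] \in D,
      (forall A B, A \in D -> B \in D -> A :|: B \in D),
      (forall A B, A \in D -> B \in D -> A :&: B \in D) &
      (forall A, A \in D -> A != set0 -> exists2 a, a \in A & A :\ a \in D)].

(* U-matroid (E, D, rho); rho is only relevant on D. *)
Definition is_Umatroid (D : {set {set E}}) (rho : {set E} -> nat) : Prop :=
  [/\ accessible_distr_lattice D,
      rho set0 = 0%N,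
      (forall A B, A \in D -> B \in D -> A \subset B -> (rho A <= rho B)%N),
      (forall A B, A \in D -> B \in D ->
         (rho (A :|: B) + rho (A :&: B) <= rho A + rho B)%N) &
      (forall A a, A \in D -> A :|: [set a] \in D ->
         (rho (A :|: [set a]) <= (rho A).+1)%N)].

Definition lattice_extension (D : {set {set E}}) (rho : {set E} -> nat)
    (D' : {set {set E}}) (rho' : {set E} -> nat) : Prop :=
  D \subset D' /\ (forall A, A \in D -> rho' A = rho A).

Variable R : realType.

Definition xsum (x : E -> R) (A : {set E}) : R := \sum_(e in A) x e.

Definition base_polyhedron (D : {set {set E}}) (rho : {set E} -> nat)
    (x : E -> R) : Prop :=
  (forall A, A \in D -> xsum x A <= (rho A)%:R) /\
  xsum x [set: E] = (rho [set: E])%:R.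

Definition is_vertex (P : (E -> R) -> Prop) (x : E -> R) : Prop :=
  P x /\ forall (y z : E -> R) (t : R), P y -> P z -> 0 < t -> t < 1 ->
    (forall e, x e = t * y e + (1 - t) * z e) -> y = z.

Definition sheared (P P' : (E -> R) -> Prop) : Prop :=
  (forall x, P' x -> P x) /\ (forall x, is_vertex P x -> is_vertex P' x).

End UMatroid.

(* Main.v *)
Require Import Defs.
From HB Require Import structures.
From mathcomp Require Import all_boot all_order all_algebra.
From mathcomp Require Import reals.
From mathcomp Require Import ring lra.
From Stdlib Require Import Classical FunctionalExtensionality.
Set Implicit Arguments. Unset Strict Implicit. Unset Printing Implicit Defensive.
Import Order.TTheory GRing.Theory Num.Theory.
Local Open Scope ring_scope.

Section Aux.
Variables (R : realType) (E : finType).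
Implicit Types (x y z : E -> R) (A B T S X : {set E}).

Lemma xsum0 x : xsum x set0 = 0.
Proof. by rewrite /xsum big_set0. Qed.

Lemma sum_ind (j : E) A : \sum_(g in A) ((g == j)%:R : R) = (j \in A)%:R.
Proof.
case: (boolP (j \in A)) => hj.
- rewrite (bigD1 j) //= eqxx big1 ?addr0 // => g /andP [_ /negbTE ->]. done.
- rewrite big1 // => g hg; case: eqP => // eq; subst g; by rewrite hg in hj.
Qed.

Lemma xsum_pert x (j i : E) (c : R) A :
  xsum (fun g => x g + c * ((g == j)%:R - (g == i)%:R)) A
  = xsum x A + c * ((j \in A)%:R - (i \in A)%:R).
Proof. by rewrite /xsum big_split /= -mulr_sumr sumrB !sum_ind. Qed.

Lemma xsum_comb x y z (t : R) A :
  (forall e, x e = t * y e + (1 - t) * z e) ->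
  xsum x A = t * xsum y A + (1 - t) * xsum z A.
Proof.
move=> h; rewrite /xsum (eq_bigr _ (fun e _ => h e)) big_split /=.
by rewrite -!mulr_sumr.
Qed.

Lemma xsum_UI x A B : xsum x (A :|: B) + xsum x (A :&: B) = xsum x A + xsum x B.
Proof.
rewrite /xsum (@big_setID _ _ _ _ (A :|: B) B) (@big_setID _ _ _ _ A B) /=.
have -> : (A :|: B) :&: B = B by apply/setP => g; rewrite !inE; case: (g \in A); case: (g \in B).
have -> : (A :|: B) :\: B = A :\: B by apply/setP => g; rewrite !inE; case: (g \in A); case: (g \in B).
rewrite setIC; lra.
Qed.

Lemma min_pos (T : eqType) (s : seq T) (P : T -> bool) (f : T -> R) :
  (forall a, P a -> 0 < f a) ->
  exists2 eps, 0 < eps & forall a, a \in s -> P a -> eps <= f a.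
Proof.
move=> hp; elim: s => [|a s [eps he IH]].
- by exists 1.
- case: (boolP (P a)) => pa.
  + exists (Order.min eps (f a)); first by rewrite lt_min he hp.
    move=> b; rewrite inE => /orP [/eqP -> _|bs pb]; first by rewrite ge_min lexx orbT.
    by rewrite ge_min IH.
  + exists eps => // b; rewrite inE => /orP [/eqP -> pb|bs pb]; last exact: IH.
    by rewrite pb in pa.
Qed.

Lemma comb_tight x y z (t r : R) P :
  0 < t -> t < 1 -> (forall e, x e = t * y e + (1 - t) * z e) ->
  xsum y P <= r -> xsum z P <= r -> xsum x P = r -> xsum y P = r /\ xsum z P = r.
Proof.
move=> t0 t1 h hy hz hx; move: hx; rewrite (xsum_comb P h) => hx.
have h1 : 0 <= t * (r - xsum y P) by apply: mulr_ge0; lra.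
have h2 : 0 <= (1 - t) * (r - xsum z P) by apply: mulr_ge0; lra.
have e1 : t * (r - xsum y P) = 0 by lra.
have e2 : (1 - t) * (r - xsum z P) = 0 by lra.
move/eqP: e1; rewrite mulf_eq0 => /orP [/eqP|/eqP]; first lra.
move/eqP: e2; rewrite mulf_eq0 => /orP [/eqP|/eqP]; first lra.
lra.
Qed.


Lemma greedy_bound (D' : {set {set E}}) (rho' : {set E} -> nat) (Tg : {set E} -> Prop) x :
  (forall A B, A \in D' -> B \in D' -> A :&: B \in D') ->
  (forall A B, A \in D' -> B \in D' ->
     (rho' (A :|: B) + rho' (A :&: B) <= rho' A + rho' B)%N) ->
  (forall T, Tg T -> T \in D' /\ xsum x T = (rho' T)%:R) ->
  (forall T, Tg T -> T != set0 -> exists2 e, e \in T & Tg (T :\ e)) ->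
  forall T, Tg T -> forall B, B \in D' -> xsum x (B :&: T) <= (rho' (B :&: T))%:R.
Proof.
move=> hcap hsub htg hstep.
suff H : forall n T, #|T| = n -> Tg T -> forall B, B \in D' -> xsum x (B :&: T) <= (rho' (B :&: T))%:R.
  by move=> T; exact: (H _ T erefl).
elim=> [|n IH] T hT tgT B hB.
- by rewrite (cards0_eq hT) setI0 xsum0 ler0n.
- have Tn0 : T != set0 by apply/eqP => T0; rewrite T0 cards0 in hT.
  have [e eT tgTe] := hstep T tgT Tn0.
  have hTe : #|T :\ e| = n by move: hT; rewrite (cardsD1 e) eT add1n => -[].
  have IHB := IH _ hTe tgTe B hB.
  case: (boolP (e \in B)) => eB; last first.
    have -> : B :&: T = B :&: (T :\ e).
      apply/setP => g; rewrite !inE; case: eqP => // ->; by rewrite (negbTE eB).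
    exact: IHB.
  have eBT : e \in B :&: T by rewrite inE eB eT.
  have hD : (B :&: T) :\ e = B :&: (T :\ e) by apply/setP => g; rewrite !inE; case: (g == e); case: (g \in B).
  have [TD xT] := htg T tgT; have [TeD xTe] := htg _ tgTe.
  have xe : x e = xsum x T - xsum x (T :\ e) by rewrite /xsum (big_setD1 e eT) /=; lra.
  have hs := hsub (B :&: T) (T :\ e) (hcap _ _ hB TD) TeD.
  have eq1 : (B :&: T) :|: (T :\ e) = T.
    apply/setP => g; rewrite !inE; case: (boolP (g == e)) => [/eqP ->|ne]; rewrite ?eT ?eB //=.
    by case: (g \in B); case: (g \in T).
  have eq2 : (B :&: T) :&: (T :\ e) = B :&: (T :\ e).
    by apply/setP => g; rewrite !inE; case: (g == e); case: (g \in B); case: (g \in T).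
  rewrite eq1 eq2 in hs.
  move: hs; rewrite -(ler_nat R) !natrD => hs.
  rewrite /xsum (big_setD1 e eBT) /= -/(xsum x _) hD.
  lra.
Qed.

Definition tightb (D : {set {set E}}) (rho : {set E} -> nat) x X :=
  (X \in D) && (xsum x X == (rho X)%:R).

Lemma tight_UI D rho x A B :
  is_Umatroid D rho -> base_polyhedron D rho x ->
  tightb D rho x A -> tightb D rho x B ->
  tightb D rho x (A :|: B) /\ tightb D rho x (A :&: B).
Proof.
case=> [[h0 hT hcup hcap hacc] r0 hmon hsub hunit] [hle hE].
move=> /andP [AD /eqP xA] /andP [BD /eqP xB].
have UD := hcup _ _ AD BD; have ID := hcap _ _ AD BD.
have hs := hsub _ _ AD BD; move: hs; rewrite -(ler_nat R) !natrD => hs.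
have h1 := hle _ UD; have h2 := hle _ ID; have hu := xsum_UI x A B.
rewrite /tightb UD ID /=; split; apply/eqP; lra.
Qed.

Lemma tight_sep D rho x (e f : E) :
  is_Umatroid D rho -> is_vertex (base_polyhedron D rho) x -> e != f ->
  exists X, tightb D rho x X && ((e \in X) != (f \in X)).
Proof.
move=> hU [[hle hE] hv] nef.
apply: NNPP => hno.
have hfor : forall X, tightb D rho x X -> (e \in X) = (f \in X).
  move=> X tX; apply/eqP; apply: negbNE; apply/negP => hn; apply: hno; exists X; by rewrite tX.
have hpos : forall X, (X \in D) && ~~ tightb D rho x X -> 0 < (rho X)%:R - xsum x X.
  move=> X /andP [XD nt]; have := hle X XD; move: nt; rewrite /tightb XD /= => nt h.
  rewrite subr_gt0 lt_neqAle h andbT; exact: nt.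
have [eps eps0 heps] := @min_pos _ (enum {set E}) _ _ hpos.
pose y c := fun g => x g + c * ((g == e)%:R - (g == f)%:R).
have hy : forall c, `|c| <= eps -> base_polyhedron D rho (y c).
  move=> c hc; split.
  - move=> A AD; rewrite /y xsum_pert.
    case: (boolP (tightb D rho x A)) => tA.
      rewrite (hfor _ tA) subrr mulr0 addr0; exact: hle.
    have := heps A (mem_enum _ A); rewrite AD tA => /(_ isT) hA.
    have hc1 : c <= eps by apply: le_trans hc; exact: ler_norm.
    have hc2 : - eps <= c by rewrite lerNl; apply: le_trans hc; rewrite -normrN; exact: ler_norm.
    case: (e \in A); case: (f \in A) => /=; lra.
  - by rewrite /y xsum_pert !inE subrr mulr0 addr0.
have h1 : `|eps| <= eps by rewrite ger0_norm // ltW.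
have h2 : `|- eps| <= eps by rewrite normrN ger0_norm // ltW.
have eqyz : y eps = y (- eps).
  apply: (hv _ _ (1/2)); [exact: hy|exact: hy|lra|lra|].
  by move=> g; rewrite /y; field.
have := congr1 (fun h => h e) eqyz; rewrite /y eqxx (negbTE nef) /=.
lra.
Qed.

Lemma tight_step D rho x T :
  is_Umatroid D rho -> is_vertex (base_polyhedron D rho) x ->
  tightb D rho x T -> T != set0 -> exists2 e, e \in T & tightb D rho x (T :\ e).
Proof.
move=> hU hv tT Tn0.
have [[h0 _ _ _ _] r0 _ _ _] := hU.
have P0 : tightb D rho x set0 && (set0 \proper T).
  by rewrite /tightb h0 xsum0 r0 eqxx /= proper0 Tn0.
case: (@arg_maxnP _ set0 (fun S => tightb D rho x S && (S \proper T)) (fun S => #|S|) P0).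
move=> S /andP [tS pS] Smax.
have [sST [e eT eS]] := properP pS.
exists e => //.
suff -> : T :\ e = S by [].
have key : forall a b X, a \in T -> a \notin S -> b \in T -> b \notin S -> tightb D rho x X ->
    a \in X -> b \notin X -> False.
  move=> a b X aT aS bT bS tX aX bX.
  have tXT := (tight_UI hU hv.1 tX tT).2.
  have tS' := (tight_UI hU hv.1 tS tXT).1.
  have pS' : S :|: (X :&: T) \proper T.
    apply/properP; split.
      by apply/subsetP => g; rewrite !inE => /orP [gS|/andP [_ ->]] //; exact: (subsetP sST).
    by exists b => //; rewrite !inE negb_or (negbTE bX) bS.
  have := Smax _ (introT andP (conj tS' pS')).
  have pSS : S \proper S :|: (X :&: T).
    apply/properP; split; first exact: subsetUl.
    by exists a => //; rewrite !inE aX aT orbT.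
  by have := proper_card pSS; move=> lt1 le1; have := leq_trans lt1 le1; rewrite ltnn.
apply/setP => g; rewrite !inE.
case: (boolP (g == e)) => [/eqP ->|ge] /=; first by rewrite (negbTE eS).
case: (boolP (g \in S)) => gS; first by rewrite (subsetP sST _ gS).
case: (boolP (g \in T)) => gT //.
have ne : e != g by rewrite eq_sym.
have [X /andP [tX sep]] := tight_sep hU hv ne.
move: sep; case: (boolP (e \in X)) => eX; case: (boolP (g \in X)) => gX //= _.
- by case: (key e g X eT eS gT gS tX eX gX).
- by case: (key g e X gT gS eT eS tX gX eX).
Qed.

Lemma forward D rho D' rho' :
  is_Umatroid D rho -> is_Umatroid D' rho' ->
  lattice_extension D rho D' rho' ->
  sheared (@base_polyhedron E R D rho) (@base_polyhedron E R D' rho').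
Proof.
move=> hU hU' [sub req].
have [[h0 hT hcup hcap hacc] r0 hmon hsub hunit] := hU.
have [[h0' hT' hcup' hcap' hacc'] r0' hmon' hsub' hunit'] := hU'.
have incl : forall x, base_polyhedron D' rho' x -> base_polyhedron D rho x.
  move=> x [hle hE]; split.
    by move=> A AD; rewrite -req //; apply: hle; exact: (subsetP sub).
  by rewrite hE req.
split => // x hv; split; last by move=> y z t /incl hy /incl hz; exact: hv.2.
have [hle hE] := hv.1.
split; last by rewrite req.
move=> A AD'.
have := @greedy_bound D' rho' (tightb D rho x) x hcap' hsub' _ _ [set: E] _ A AD'.
rewrite setIT; apply.
- move=> T /andP [TD /eqP xT]; split; first exact: (subsetP sub).
  by rewrite req.
- move=> T tT Tn0; exact: tight_step hU hv tT Tn0.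
- by rewrite /tightb hT hE eqxx.
Qed.

Definition pre (s : seq E) k : {set E} := [set g in take k s].
Definition good (D : {set {set E}}) s := uniq s /\ forall k, pre s k \in D.

Lemma pre_nil k : pre [::] k = set0.
Proof. by apply/setP => g; rewrite /pre !inE. Qed.

Lemma good_rcons D s e : good D s -> e \notin s -> [set g in s] :|: [set e] \in D ->
  good D (rcons s e).
Proof.
move=> [us hs] es hD; split; first by rewrite rcons_uniq es.
move=> k; rewrite /pre -cats1 take_cat.
case: ifP => _; first exact: hs.
case: (k - size s)%N => [|m] /=.
- by rewrite cats0; have := hs (size s); rewrite /pre take_size.
- have -> : [set g in s ++ [:: e]] = [set g in s] :|: [set e].
    by apply/setP => g; rewrite !inE mem_cat mem_seq1.
  done.
Qed.

Lemma down D : accessible_distr_lattice D ->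
  forall A, A \in D -> exists s, good D s /\ [set g in s] = A.
Proof.
move=> [h0 hT hcup hcap hacc].
suff H : forall n A, #|A| = n -> A \in D -> exists s, good D s /\ [set g in s] = A.
  by move=> A; exact: H _ A erefl.
elim=> [|n IH] A hA AD.
- exists [::]; rewrite (cards0_eq hA); split.
    by split=> // k; rewrite pre_nil.
  by apply/setP => g; rewrite !inE.
- have An0 : A != set0 by apply/eqP => A0; rewrite A0 cards0 in hA.
  have [e eA AeD] := hacc A AD An0.
  have hAe : #|A :\ e| = n by move: hA; rewrite (cardsD1 e) eA add1n => -[].
  have [s [gs hs]] := IH _ hAe AeD.
  have es : e \notin s.
    apply/negP => es; have : e \in [set g in s] by rewrite inE.
    by rewrite hs !inE eqxx.
  have hU : [set g in s] :|: [set e] = A by rewrite hs setUC setD1K.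
  exists (rcons s e); split; first by apply: good_rcons => //; rewrite hU.
  by rewrite -hU; apply/setP => g; rewrite !inE mem_rcons inE orbC.
Qed.

Lemma up_step D : accessible_distr_lattice D ->
  forall n B A, #|B| = n -> A \in D -> B \in D -> A \proper B ->
  exists2 e, e \in B :\: A & A :|: [set e] \in D.
Proof.
move=> [h0 hT hcup hcap hacc].
elim=> [|n IH] B A hB AD BD pAB.
- by have := proper_card pAB; rewrite (cards0_eq hB) cards0.
- have [sAB [c cB cA]] := properP pAB.
  have Bn0 : B != set0 by apply/eqP => B0; rewrite B0 in cB; rewrite inE in cB.
  have [b bB BbD] := hacc B BD Bn0.
  have hBb : #|B :\ b| = n by move: hB; rewrite (cardsD1 b) bB add1n => -[].
  case: (boolP (b \in A)) => bA.
  + have A'D := hcap _ _ AD BbD.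
    have pA' : A :&: (B :\ b) \proper B :\ b.
      apply/properP; split; first exact: subsetIr.
      exists c; last by rewrite inE (negbTE cA).
      rewrite !inE cB andbT; apply/eqP => cb; by rewrite cb bA in cA.
    have [e eBA eD] := IH _ _ hBb A'D BbD pA'.
    exists e.
      move: eBA; rewrite !inE => /andP [hn /andP [eb eB]]; rewrite eB andbT.
      by move: hn; rewrite eb eB !andbT.
    have -> : A :|: [set e] = A :|: ((A :&: (B :\ b)) :|: [set e]).
      by apply/setP => g; rewrite !inE; case: (g \in A); case: (g == e).
    exact: hcup.
  + have sABb : A \subset B :\ b.
      apply/subsetP => g gA; rewrite !inE (subsetP sAB _ gA) andbT.
      by apply/eqP => gb; rewrite -gb gA in bA.
    case: (boolP (A == B :\ b)) => [/eqP AE|AnE].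
      exists b; first by rewrite !inE bB andbT.
      by rewrite AE setUC setD1K.
    have pA : A \proper B :\ b by rewrite properEneq AnE sABb.
    have [e eBA eD] := IH _ _ hBb AD BbD pA.
    exists e => //.
    by move: eBA; rewrite !inE => /andP [-> /andP [_ ->]].
Qed.

Lemma up D : accessible_distr_lattice D ->
  forall n s, good D s -> #|~: [set g in s]| = n ->
  exists u, good D (s ++ u) /\ [set g in s ++ u] = setT.
Proof.
move=> hD; have [h0 hT hcup hcap hacc] := hD.
elim=> [|n IH] s gs hc.
- exists [::]; rewrite cats0; split => //.
  apply/setP => g; have := cards0_eq hc; move/setP/(_ g); rewrite !inE.
  by case: (g \in s).
- have CD : [set g in s] \in D by have := gs.2 (size s); rewrite /pre take_size.
  have pC : [set g in s] \proper [set: E].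
    rewrite properEneq subsetT andbT; apply/eqP => hC.
    by move: hc; rewrite hC setCT cards0.
  have [e eC eD] := up_step hD erefl CD hT pC.
  have es : e \notin s by move: eC; rewrite !inE andbT.
  have gs' := good_rcons gs es eD.
  have hc' : #|~: [set g in rcons s e]| = n.
    move: hc; rewrite (cardsD1 e) !inE es add1n => -[] <-.
    by apply: eq_card => g; rewrite !inE mem_rcons inE negb_or.
  have [u [gu hu]] := IH _ gs' hc'.
  by exists (e :: u); rewrite -cat_rcons.
Qed.

Lemma chain D : accessible_distr_lattice D ->
  forall A, A \in D -> exists s, [/\ good D s, [set g in s] = setT & exists k, pre s k = A].
Proof.
move=> hD A AD.
have [s [gs hs]] := down hD AD.
have [u [gu hu]] := up hD gs erefl.
exists (s ++ u); split => //; exists (size s).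
by rewrite /pre take_size_cat.
Qed.

Definition greedy (rho : {set E} -> nat) (s : seq E) : E -> R :=
  fun e => (rho (pre s (index e s).+1))%:R - (rho (pre s (index e s)))%:R.

Lemma pre_S s k e0 : uniq s -> (k < size s)%N ->
  pre s k.+1 = nth e0 s k |: pre s k /\ nth e0 s k \notin pre s k.
Proof.
move=> us hk; split.
  by apply/setP => g; rewrite /pre (take_nth e0 hk) !inE mem_rcons inE.
have := take_uniq k.+1 us; rewrite (take_nth e0 hk) rcons_uniq => /andP [h _].
by rewrite /pre inE.
Qed.

Lemma greedy_tight rho s : rho set0 = 0%N -> uniq s ->
  forall k, xsum (greedy rho s) (pre s k) = (rho (pre s k))%:R.
Proof.
move=> r0 us; elim=> [|k IH].
  have -> : pre s 0 = set0 by apply/setP => g; rewrite /pre take0 !inE.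
  by rewrite xsum0 r0.
case: (ltnP k (size s)) => hk.
- have e0 : E by destruct s; [done| exact s].
  have [hS hn] := pre_S e0 us hk.
  rewrite hS /xsum big_setU1 //= -/(xsum _ _) IH /greedy index_uniq // -hS.
  by rewrite subrK.
- have h1 : pre s k.+1 = pre s k by rewrite /pre !take_oversize // leqW.
  by rewrite h1.
Qed.

Lemma greedy_base D rho s : is_Umatroid D rho -> good D s -> [set g in s] = setT ->
  base_polyhedron D rho (greedy rho s).
Proof.
move=> [[h0 hT hcup hcap hacc] r0 hmon hsub hunit] [us gs] hset.
have hfull : pre s (size s) = setT by rewrite /pre take_size.
split; last by rewrite -hfull greedy_tight.
move=> A AD.
have := @greedy_bound D rho (fun T => exists2 k, (k <= size s)%N & T = pre s k)
  (greedy rho s) hcap hsub _ _ setT _ A AD.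
rewrite setIT; apply.
- by move=> T [k _ ->]; split; [exact: gs | exact: greedy_tight].
- move=> T [k hk ->] Tn0.
  case: k hk Tn0 => [|k] hk Tn0.
    move: Tn0; have -> : pre s 0 = set0 by apply/setP => g; rewrite /pre take0 !inE.
    by rewrite eqxx.
  have e0 : E by destruct s; [done| exact s].
  have [hS hn] := pre_S e0 us hk.
  exists (nth e0 s k); first by rewrite hS setU11.
  by exists k; [exact: ltnW | rewrite hS setU1K].
- by exists (size s).
Qed.

Lemma greedy_vertex D rho s : is_Umatroid D rho -> good D s -> [set g in s] = setT ->
  is_vertex (base_polyhedron D rho) (greedy rho s).
Proof.
move=> hU gs hset; have [us gsD] := gs.
have [_ r0 _ _ _] := hU.
split; first exact: greedy_base.
move=> y z t [hly hEy] [hlz hEz] t0 t1 hc.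
apply: functional_extensionality => e.
have es : e \in s.
  have : e \in [set g in s] by rewrite hset in_setT.
  by rewrite inE.
have hk : (index e s < size s)%N by rewrite index_mem.
have [hS hn] := pre_S e us hk; rewrite nth_index // in hS hn.
have T1 := comb_tight t0 t1 hc (hly _ (gsD (index e s).+1)) (hlz _ (gsD (index e s).+1))
   (greedy_tight r0 us _).
have T2 := comb_tight t0 t1 hc (hly _ (gsD (index e s))) (hlz _ (gsD (index e s)))
   (greedy_tight r0 us _).
move: T1; rewrite hS /xsum !big_setU1 //= -!/(xsum _ _) => -[Ty Tz].
case: T2 => Ty2 Tz2; lra.
Qed.

Lemma backward D rho D' rho' :
  is_Umatroid D rho -> is_Umatroid D' rho' ->
  sheared (@base_polyhedron E R D rho) (@base_polyhedron E R D' rho') ->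
  lattice_extension D rho D' rho'.
Proof.
move=> hU hU' [incl vert].
have [hD r0 hmon hsub hunit] := hU; have [h0 hT hcup hcap hacc] := hD.
have [hD' r0' hmon' hsub' hunit'] := hU'; have [h0' hT' hcup' hcap' hacc'] := hD'.
have [s [gs hs _]] := chain hD hT.
have vx0 := greedy_vertex hU gs hs.
set x0 := greedy rho s in vx0.
have bx0 := vx0.1; have bx0' := (vert _ vx0).1.
have sub : D \subset D'.
  apply/subsetP => A AD; apply: NNPP => hA'.
  pose M j := \bigcap_(B in D' | j \in B) B.
  have MD : forall j, M j \in D'.
    move=> j; apply: (big_ind (fun X => X \in D')) => [|X Y XD YD|X /andP [XD _]] //; exact: hcap'.
  have jM : forall j, j \in M j by move=> j; apply/bigcapP => X /andP [_ ->].
  have Msub : forall j X, X \in D' -> j \in X -> M j \subset X.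
    by move=> j X XD jX; apply: bigcap_inf; rewrite XD jX.
  have [j jA nMA] : exists2 j, j \in A & ~~ (M j \subset A).
    apply: NNPP => hn; apply: hA'.
    have -> : A = \bigcup_(j in A) M j.
      apply/setP => g; apply/idP/bigcupP => [gA|[j jA gM]]; first by exists g.
      have : M j \subset A by apply/negPn/negP => hM; apply: hn; exists j.
      by move/subsetP; apply.
    apply: (big_ind (fun X => X \in D')) => //; exact: hcup'.
  have [i iM iA] := subsetPn nMA.
  have hij : forall X, X \in D' -> j \in X -> i \in X.
    by move=> X XD jX; exact: (subsetP (Msub _ _ XD jX)).
  pose c := (rho A)%:R - xsum x0 A + 1.
  have c0 : 0 <= c by have := bx0.1 A AD; rewrite /c; lra.
  pose y := fun g => x0 g + c * ((g == j)%:R - (g == i)%:R).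
  have by' : base_polyhedron D' rho' y.
    split.
    - move=> X XD; rewrite /y xsum_pert.
      have := bx0'.1 X XD.
      case: (boolP (j \in X)) => jX; first by rewrite (hij X XD jX) subrr mulr0 addr0.
      case: (i \in X) => /= h; nra.
    - by rewrite /y xsum_pert !in_setT subrr mulr0 addr0; exact: bx0'.2.
  have := (incl _ by').1 A AD; rewrite /y xsum_pert jA (negbTE iA) /c /=.
  lra.
split => // A AD.
have AD' := subsetP sub _ AD.
apply/eqP; rewrite eqn_leq; apply/andP; split.
- have [s' [gs' hs' [k' hk']]] := chain hD' AD'.
  have := (incl _ (greedy_base hU' gs' hs')).1 A AD.
  by rewrite -hk' greedy_tight ?ler_nat //; case: gs'.
- have [s1 [gs1 hs1 [k1 hk1]]] := chain hD AD.
  have := (vert _ (greedy_vertex hU gs1 hs1)).1.1 A AD'.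
  by rewrite -hk1 greedy_tight ?ler_nat //; case: gs1.
Qed.
End Aux.

Theorem theorem4p4 (R : realType) (E : finType)
    (D D' : {set {set E}}) (rho rho' : {set E} -> nat) :
  is_Umatroid D rho -> is_Umatroid D' rho' ->
  (lattice_extension D rho D' rho' <->
   sheared (@base_polyhedron E R D rho) (@base_polyhedron E R D' rho')).
Proof.
move=> hU hU'; split; [exact: forward | exact: backward].
Qed.
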